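(* Let $V$ be an $m$-dimensional real vector space carrying two inner products $g$ and $g_E$, and let $\mathrm{II}$ be a symmetric bilinear form on $V$ which is positive semidefinite, with $g_E$-trace $\bar H=\mathrm{tr}_{g_E}\mathrm{II}>0$. Let $H>0$ satisfy $H^2 g(v,v)\ge\bar H^2 g_E(v,v)$ for all $v\in V$. Then for every $g$-orthonormal basis $\{\tau_i\}_{i=1}^m$ and every $g_E$-orthonormal basis $\{\bar\tau_i\}_{i=1}^m$ of $V$, $$H\;\ge\;\sum_{i=1}^m\mathrm{II}(\tau_i,\bar\tau_i).$$
   Context: In the paper this is applied at a point $p$ of $\partial M$ with $V=T_p\partial M$ identified with $T_{F(p)}\partial\bar M$ via the boundary diffeomorphism $F:\partial M\to\partial\bar M$ ($\bar M\subset\mathbb R^{n+2}$ convex), $g$ the induced Riemannian metric, $g_E$ the pulled-back Euclidean metric, $\mathrm{II}$ the pulled-back Euclidean second fundamental form of $\partial\bar M$, $\bar H$ its mean curvature and $H=H_{\partial M}$ the mean curvature of $\partial M$; the hypothesis is then the rescaled mean curvature comparison $H_{\partial M}^2g\ge \bar H^2 g_E$. *)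

(* Defs.v *)
From mathcomp Require Import all_boot all_order all_algebra.
Set Implicit Arguments. Unset Strict Implicit. Unset Printing Implicit Defensive.
Import Order.TTheory GRing.Theory Num.Theory.
Local Open Scope ring_scope.

(* Model: V = R^m as row vectors 'rV[R]_m.  A bilinear form on V is
   represented by its Gram matrix A : 'M[R]_m, acting as
   bform A u v = u A v^T. *)
Definition bform (R : comNzRingType) (m : nat) (A : 'M[R]_m) (u v : 'rV[R]_m) : R :=
  (u *m A *m v^T) 0 0.

Definition sym_gram (R : comNzRingType) (m : nat) (A : 'M[R]_m) : Prop :=
  A^T = A.

Definition inner_product (R : numFieldType) (m : nat) (A : 'M[R]_m) : Prop :=
  sym_gram A /\ forall v : 'rV[R]_m, v != 0 -> 0 < bform A v v.

Definition psd_form (R : numFieldType) (m : nat) (A : 'M[R]_m) : Prop :=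
  forall v : 'rV[R]_m, 0 <= bform A v v.

(* trace of the bilinear form B with respect to the inner product G:
   tr_G B = g^{ij} B_{ij} = \tr (G^{-1} B) *)
Definition trace_wrt (R : numFieldType) (m : nat) (G B : 'M[R]_m) : R :=
  \tr (invmx G *m B).

Definition orthonormal_basis (R : numFieldType) (m : nat) (G T : 'M[R]_m) : Prop :=
  forall i j : 'I_m, bform G (row i T) (row j T) = (i == j)%:R.

(* Main.v *)
Require Import Defs.
From mathcomp Require Import all_boot all_order all_algebra.
From mathcomp Require Import ring lra.
Set Implicit Arguments. Unset Strict Implicit. Unset Printing Implicit Defensive.
Import Order.TTheory GRing.Theory Num.Theory.
Local Open Scope ring_scope.
Section Dec.
Variable R : realFieldType.

Lemma split_l n1 n2 (i : 'I_n1) : split (lshift n2 i) = inl i.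
Proof. exact: (unsplitK (inl _ i)). Qed.
Lemma split_r n1 n2 (i : 'I_n2) : split (rshift n1 i) = inr i.
Proof. exact: (unsplitK (inr _ i)). Qed.

Lemma addE m1 n1 (A B : 'M[R]_(m1,n1)) i j : (A + B) i j = A i j + B i j.
Proof. by rewrite mxE. Qed.
Lemma scaleE m1 n1 c (A : 'M[R]_(m1,n1)) i j : (c *: A) i j = c * A i j.
Proof. by rewrite mxE. Qed.

Lemma subE m1 n1 (A B : 'M[R]_(m1,n1)) i j : (A - B) i j = A i j - B i j.
Proof. by rewrite !mxE. Qed.

Lemma scal_id (al be xi : R) : (al = 0 -> be = 0) ->
  al * xi ^+ 2 + 2 * xi * be = al * (xi + al^-1 * be) ^+ 2 - al^-1 * be ^+ 2.
Proof.
have [->|h] := eqVneq al 0.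
  by move=> /(_ erefl) ->; rewrite invr0; ring.
by move=> _; field.
Qed.

Lemma rowT n (x : 'rV[R]_(1 + n)) (A : 'rV[R]_1) (B : 'rV[R]_n) :
  (x *m (row_mx A B)^T) 0 0 = (lsubmx x *m A^T) 0 0 + (rsubmx x *m B^T) 0 0.
Proof. by rewrite -{1}[x]hsubmxK tr_row_mx mul_row_col addE. Qed.

Lemma e11 (A : 'M[R]_(1,1)) (B : 'M[R]_(1,1)) : (A *m B) 0 0 = A 0 0 * B 0 0.
Proof. by rewrite mxE big_ord1. Qed.

Lemma decomp n (P : 'M[R]_n) : P^T = P -> (forall x : 'rV_n, 0 <= (x *m P *m x^T) 0 0) ->
  exists (w : 'I_n -> R) (u : 'I_n -> 'rV[R]_n), (forall k, 0 <= w k) /\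
    forall x : 'rV[R]_n, (x *m P *m x^T) 0 0 = \sum_k w k * ((x *m (u k)^T) 0 0) ^+ 2.
Proof.
elim: n P => [|n IH] P Psym Ppsd.
  exists (fun _ => 0), (fun _ => 0); split => // x.
  by rewrite big_ord0 !mxE big_ord0.
pose Q : 'M[R]_(1 + n) := P.
pose a := ulsubmx Q; pose b := ursubmx Q; pose d := drsubmx Q.
have hc : dlsubmx Q = b^T /\ d^T = d.
  have E : (block_mx a b (dlsubmx Q) d)^T = block_mx a b (dlsubmx Q) d by rewrite submxK; exact: Psym.
  move: E; rewrite tr_block_mx => /eq_block_mx [_ _ h1 h2].
  by split; rewrite // -h1.
pose al := a 0 0.
have key : forall x : 'rV[R]_(1 + n),
  (x *m Q *m x^T) 0 0 = al * (lsubmx x 0 0)^+2 + 2 * lsubmx x 0 0 * (b *m (rsubmx x)^T) 0 0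
     + (rsubmx x *m d *m (rsubmx x)^T) 0 0.
  move=> x.
  rewrite -[Q]submxK -[in LHS](hsubmxK x) tr_row_mx mul_row_block mul_row_col.
  rewrite !mulmxDl !addE; case: hc => -> _.
  rewrite -/a -/b -/d.
  rewrite [(lsubmx x *m a *m _) 0 0]e11 e11 -/al.
  have -> : (rsubmx x *m b^T *m (lsubmx x)^T) 0 0 = (b *m (rsubmx x)^T) 0 0 * lsubmx x 0 0.
    rewrite e11 [(lsubmx x)^T 0 0]mxE; congr (_ * _).
    by rewrite -[rsubmx x *m b^T]trmxK trmx_mul trmxK [LHS]mxE.
  have -> : (lsubmx x *m b *m (rsubmx x)^T) = lsubmx x 0 0 *: (b *m (rsubmx x)^T).
    by rewrite -mulmxA {1}[lsubmx x]mx11_scalar mul_scalar_mx.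
  rewrite scaleE [(lsubmx x)^T 0 0]mxE. ring.
have al0 : 0 <= al.
  have := Ppsd (row_mx 1 0 : 'rV_(1+n)); rewrite -/Q key row_mxKl row_mxKr.
  by rewrite trmx0 !mulmx0 !mxE /= expr1n mulr1 mulr0 !addr0.
have hb : al = 0 -> forall y : 'rV_n, (b *m y^T) 0 0 = 0.
  move=> a0 y; apply/eqP/negPn/negP => hne.
  set be := (b *m y^T) 0 0 in hne.
  set de := (y *m d *m y^T) 0 0.
  have := Ppsd (row_mx ((- (de + 1) / (2 * be))%:M) y : 'rV_(1+n)).
  rewrite -/Q key row_mxKl row_mxKr a0 -/be -/de mxE eqxx mulr1n mul0r add0r.
  have -> : 2 * (- (de + 1) / (2 * be)) * be = - (de + 1) by field.
  lra.
pose S := d - al^-1 *: (b^T *m b).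
have Ssym : S^T = S.
  rewrite /S linearB linearZ /= trmx_mul trmxK.
  by case: hc => _ ->.
have Sid : forall y : 'rV_n, (y *m S *m y^T) 0 0 =
    (y *m d *m y^T) 0 0 - al^-1 * ((b *m y^T) 0 0) ^+ 2.
  move=> y; rewrite /S mulmxBr mulmxBl subE; congr (_ - _).
  rewrite -scalemxAr -scalemxAl scaleE; congr (_ * _).
  rewrite !mulmxA -(mulmxA (y *m b^T)) e11 expr2; congr (_ * _).
  by rewrite -[y *m b^T]trmxK trmx_mul trmxK [LHS]mxE.
have Spsd : forall y : 'rV_n, 0 <= (y *m S *m y^T) 0 0.
  move=> y; rewrite Sid.
  have := Ppsd (row_mx ((- (al^-1 * (b *m y^T) 0 0))%:M) y : 'rV_(1+n)).
  rewrite -/Q key row_mxKl row_mxKr mxE eqxx mulr1n.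
  rewrite (scal_id _ (fun h => hb h y)).
  by rewrite addNr expr0n /= mulr0 add0r addrC.
have [w' [u' [w'0 hw']]] := IH S Ssym Spsd.
exists (fun k : 'I_(1 + n) => match split k with inl _ => al | inr k' => w' k' end).
exists (fun k : 'I_(1 + n) => match split k with
    inl _ => row_mx 1 (al^-1 *: b) | inr k' => row_mx 0 (u' k') end : 'rV_(1 + n)).
split.
  by move=> k; case: split.
move=> x; change ((x *m Q *m x^T) 0 0 = \sum_(k < 1 + n) (match split k with inl _ => al | inr k' => w' k' end) *
   (x *m (match split k with
    inl _ => row_mx 1 (al^-1 *: b) | inr k' => row_mx 0 (u' k') end : 'rV_(1 + n))^T) 0 0 ^+ 2).
rewrite big_split_ord /= big_ord1 split_l.
under eq_bigr => k _ do rewrite split_r.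
rewrite key rowT trmx1 mulmx1.
under eq_bigr => k _ do rewrite rowT trmx0 mulmx0 [X in X + _]mxE add0r.
rewrite -hw' Sid linearZ /= -scalemxAr scaleE.
have -> : (rsubmx (x : 'rV_(1+n)) *m b^T) 0 0 = (b *m (rsubmx (x : 'rV_(1+n)))^T) 0 0.
  by rewrite -[rsubmx (x : 'rV_(1+n)) *m b^T]trmxK trmx_mul trmxK [LHS]mxE.
rewrite (scal_id _ (fun h => hb h _)); ring.
Qed.


Lemma bexp m (A : 'M[R]_m) (x y : 'rV[R]_m) (al be : R) :
  ((al *: x - be *: y) *m A *m (al *: x - be *: y)^T) 0 0 =
  al ^+ 2 * (x *m A *m x^T) 0 0 - al * be * (x *m A *m y^T) 0 0
  - al * be * (y *m A *m x^T) 0 0 + be ^+ 2 * (y *m A *m y^T) 0 0.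
Proof.
have -> : (al *: x - be *: y)^T = al *: x^T - be *: y^T by apply/matrixP => i j; rewrite !mxE.
rewrite !mulmxBl !mulmxBr -!scalemxAl -!scalemxAr.
rewrite !subE !scaleE; ring.
Qed.

Lemma bsym m (A : 'M[R]_m) (x y : 'rV[R]_m) : A^T = A ->
  (y *m A *m x^T) 0 0 = (x *m A *m y^T) 0 0.
Proof.
move=> hA; transitivity ((y *m A *m x^T)^T 0 0); first by rewrite [RHS]mxE.
by rewrite !trmx_mul trmxK hA mulmxA.
Qed.

Lemma sqsum_ge0 m (x : 'rV[R]_m) : 0 <= (x *m x^T) 0 0.
Proof. rewrite mxE; apply: sumr_ge0 => k _; rewrite mxE -expr2; exact: sqr_ge0. Qed.

Lemma ent m (A B C : 'M[R]_m) i j : bform B (row i A) (row j C) = (A *m B *m C^T) i j.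
Proof.
rewrite /bform -row_mul !mxE; apply: eq_bigr => k _; by rewrite !mxE.
Qed.

Lemma colsq m (T : 'M[R]_m) (u : 'rV[R]_m) :
  \sum_i ((row i T *m u^T) 0 0) ^+ 2 = ((T *m u^T)^T *m (T *m u^T)) 0 0.
Proof.
rewrite [RHS]mxE; apply: eq_bigr => i _.
by rewrite [(_^T) 0 i]mxE -row_mul [(row _ _) 0 0]mxE expr2.
Qed.

Lemma percol m (g gE T Tb : 'M[R]_m) (K H : R) (u : 'rV[R]_m) :
  T *m g *m T^T = 1%:M -> Tb *m gE *m Tb^T = 1%:M -> Tb \in unitmx -> 0 < H ->
  (forall v : 'rV[R]_m, K ^+ 2 * bform gE v v <= H ^+ 2 * bform g v v) ->
  K ^+ 2 * \sum_i ((row i T *m u^T) 0 0) ^+ 2 <= H ^+ 2 * \sum_i ((row i Tb *m u^T) 0 0) ^+ 2.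
Proof.
move=> TgT TbE uTb Hp hyp.
rewrite !colsq.
set y := T *m u^T; set y' := Tb *m u^T.
have ey : y = T *m u^T by []. have ey' : y' = Tb *m u^T by [].
clearbody y y'.
set a := (y^T *m y) 0 0; set bb := (y'^T *m y') 0 0.
pose z := y^T *m T.
have gz : bform g z z = a.
  rewrite /bform /a; have -> : z *m g *m z^T = y^T *m (T *m g *m T^T) *m y.
    by rewrite /z trmx_mul trmxK !mulmxA.
  by rewrite TgT mulmx1.
pose x := z *m invmx Tb.
have xT : x *m Tb = z by rewrite /x mulmxKV.
have gEz : bform gE z z = (x *m x^T) 0 0.
  rewrite /bform -xT; have -> : x *m Tb *m gE *m (x *m Tb)^T = x *m (Tb *m gE *m Tb^T) *m x^T.
    by rewrite trmx_mul !mulmxA.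
  by rewrite TbE mulmx1.
have xy : (x *m y') 0 0 = a.
  by rewrite ey' mulmxA xT /z -mulmxA -ey.
have h1 := hyp z; rewrite gz gEz in h1.
have h2 : 0 <= ((K ^+ 2 *: x - H ^+ 2 *: y'^T) *m 1%:M *m (K ^+ 2 *: x - H ^+ 2 *: y'^T)^T) 0 0.
  by rewrite mulmx1; exact: sqsum_ge0.
rewrite bexp !mulmx1 trmxK xy in h2.
have e3 : (y'^T *m x^T) 0 0 = a by rewrite -xy -trmx_mul [LHS]mxE.
rewrite e3 in h2.
have h3 : K ^+ 2 * (K ^+ 2 * (x *m x^T) 0 0) <= K ^+ 2 * (H ^+ 2 * a).
  by rewrite ler_wpM2l // sqr_ge0.
have H2 : 0 < H ^+ 2 by rewrite exprn_gt0.
have h4 : 0 <= H ^+ 2 * (H ^+ 2 * bb - K ^+ 2 * a).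
  rewrite mulrBr; move: h2 h3; rewrite /bb; set X := (x *m x^T) 0 0; set Y := (y'^T *m y') 0 0.
  move=> h2 h3; nra.
by move: h4; rewrite pmulr_rge0 // subr_ge0.
Qed.
End Dec.

Theorem proposition3p1 (R : realFieldType) (m : nat) (g gE II : 'M[R]_m) (H : R) :
  inner_product g -> inner_product gE ->
  sym_gram II -> psd_form II ->
  0 < trace_wrt gE II ->
  0 < H ->
  (forall v : 'rV[R]_m, (trace_wrt gE II) ^+ 2 * bform gE v v <= H ^+ 2 * bform g v v) ->
  forall tau taubar : 'M[R]_m,
    orthonormal_basis g tau -> orthonormal_basis gE taubar ->
    \sum_(i < m) bform II (row i tau) (row i taubar) <= H.
Proof.
move=> hg hgE hIIs hpsd hK hH hyp tau taubar ho hob.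
set K := trace_wrt gE II in hK hyp *.
have TgT : tau *m g *m tau^T = 1%:M.
  by apply/matrixP => i j; rewrite -ent ho mxE.
have TbE : taubar *m gE *m taubar^T = 1%:M.
  by apply/matrixP => i j; rewrite -ent hob mxE.
have hTb : taubar *m (gE *m taubar^T) = 1%:M by rewrite mulmxA TbE.
have [uTb ugT] := mulmx1_unit hTb.
have e1 : gE *m taubar^T = invmx taubar.
  by rewrite -[LHS](mulKmx uTb) hTb mulmx1.
have ugE : gE \in unitmx by move: ugT; rewrite unitmx_mul => /andP[].
have e2 : invmx gE = taubar^T *m taubar.
  by rewrite -[RHS](mulKmx ugE) [gE *m (_ *m _)]mulmxA e1 mulVmx // mulmx1.
have hKs : K = \sum_i bform II (row i taubar) (row i taubar).
  rewrite /K /trace_wrt e2 -mulmxA mxtrace_mulC /mxtrace.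
  by apply: eq_bigr => i _; rewrite ent.
have [w [u [w0 hw]]] := decomp hIIs hpsd.
set S1 := \sum_i bform II (row i tau) (row i tau).
have hS1 : K ^+ 2 * S1 <= H ^+ 2 * K.
  rewrite {2}hKs /S1 /bform.
  under eq_bigr => i _ do rewrite hw.
  under [in X in _ <= X]eq_bigr => i _ do rewrite hw.
  rewrite exchange_big [in X in _ <= X]exchange_big /=.
  rewrite !mulr_sumr; apply: ler_sum => k _.
  rewrite -!mulr_sumr mulrCA [X in _ <= X]mulrCA; apply: ler_wpM2l => //.
  exact: (percol _ TgT TbE uTb hH hyp).
have hsum : 0 <= \sum_i (K ^+ 2 * bform II (row i tau) (row i tau)
    - K * H * (2 * bform II (row i tau) (row i taubar)) + H ^+ 2 * bform II (row i taubar) (row i taubar)).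
  apply: sumr_ge0 => i _.
  have := hpsd (K *: row i tau - H *: row i taubar).
  rewrite /bform bexp (bsym _ _ hIIs); move=> h; lra.
rewrite !big_split /= sumrN -!mulr_sumr -hKs -/S1 in hsum.
set P := \sum_i bform II (row i tau) (row i taubar) in hsum *.
have hKH : 0 < K * H by rewrite mulr_gt0.
rewrite -(ler_pM2l hKH).
nra.
Qed.
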